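(* Let $(F,v)$ be a valued field, $(V,q)$ a quadratic space over $F$, and $\alpha$ a $v$-norm on $V$ which is compatible of depth $\varepsilon$ with $q$, where $0\le\varepsilon<v(2)$. Then there are $2$-dimensional subspaces $V_1,\dots,V_n$ of $V$ such that, with $q_i=q|_{V_i}$ and $\alpha_i=\alpha|_{V_i}$: (1) $(V,q)=(V_1,q_1)\perp\dots\perp(V_n,q_n)$ (orthogonal sum with respect to the polar form $b_q$); (2) each $\alpha_i$ is a $v$-norm on $V_i$ which is $\varepsilon$-compatible with $q_i$, and $\alpha=\alpha_1\oplus\dots\oplus\alpha_n$, i.e. $\alpha(x_1+\dots+x_n)=\min_i\alpha(x_i)$ for $x_i\in V_i$.
   Context: $F$ is a field with valuation $v\colon F\to\Gamma\cup\{\infty\}$, $\Gamma$ divisible totally ordered abelian group; $v(2)=\infty$ iff $\operatorname{char}F=2$. A $v$-norm on a finite-dimensional $F$-space $V$ is $\alpha\colon V\to\Gamma\cup\{\infty\}$ with $\alpha(x)=\infty\iff x=0$, $\alpha(\lambda x)=v(\lambda)+\alpha(x)$, $\alpha(x+y)\ge\min(\alpha(x),\alpha(y))$, admitting a basis $(e_i)$ with $\alpha(\sum\lambda_ie_i)=\min\alpha(\lambda_ie_i)$. For $\varepsilon\in\Gamma$, $\varepsilon\ge0$, $\alpha$ is $\varepsilon$-compatible (compatible of depth $\varepsilon$) with $q$, whose polar form is $b_q(x,y)=q(x+y)-q(x)-q(y)$, if (a) $v(b_q(x,y))\ge\alpha(x)+\alpha(y)+\varepsilon$ for all $x,y$;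 (b) $v(q(x))\ge2\alpha(x)$ for all $x$; (c) for every $x\ne0$ there is $y\ne0$ with $v(b_q(x,y))=\alpha(x)+\alpha(y)+\varepsilon$. *)

(* Defs.v *)
From HB Require Import structures.
From mathcomp Require Import all_boot all_order all_algebra.
Set Implicit Arguments. Unset Strict Implicit. Unset Printing Implicit Defensive.
Import Order.TTheory GRing.Theory.
Local Open Scope ring_scope.

Definition divisible_ordered_group (G : zmodType) (le : rel G) : Prop :=
  (forall x, le x x) /\
  (forall x y, le x y -> le y x -> x = y) /\
  (forall x y z, le x y -> le y z -> le x z) /\
  (forall x y, le x y \/ le y x) /\
  (forall x y z, le x y -> le (x + z) (y + z)) /\
  (forall (x : G) (n : nat), (0 < n)%N -> exists y : G, y *+ n = x).

(** [option G] models [G ∪ {∞}], with [None] = ∞. *)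
Definition oadd (G : zmodType) (a b : option G) : option G :=
  match a, b with Some x, Some y => Some (x + y) | _, _ => None end.

Definition ole (G : zmodType) (le : rel G) (a b : option G) : Prop :=
  match a, b with
  | _, None => True
  | None, Some _ => False
  | Some x, Some y => le x y
  end.

Definition olt (G : zmodType) (le : rel G) (a b : option G) : Prop :=
  ole le a b /\ a <> b.

Definition omin (G : zmodType) (le : rel G) (a b : option G) : option G :=
  match a, b with
  | None, _ => b
  | _, None => a
  | Some x, Some y => if le x y then Some x else Some y
  end.

Definition ominI (G : zmodType) (le : rel G) (n : nat) (f : 'I_n -> option G)
  : option G := foldr (omin le) None [seq f i | i <- enum 'I_n].

Definition valuation (F : fieldType) (G : zmodType) (le : rel G)
  (v : F -> option G) : Prop :=
  [/\ (forall x, v x = None <-> x = 0),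
      (forall x y, v (x * y) = oadd (v x) (v y)) &
      (forall x y, ole le (omin le (v x) (v y)) (v (x + y)))].

Definition polar (F : fieldType) (V : vectType F) (q : V -> F) (x y : V) : F :=
  q (x + y) - q x - q y.

Definition quadratic_form (F : fieldType) (V : vectType F) (q : V -> F) : Prop :=
  (forall (a : F) (x : V), q (a *: x) = a ^+ 2 * q x) /\
  (forall (a : F) (x y z : V),
      polar q (a *: x + y) z = a * polar q x z + polar q y z).

Definition vnorm_on (F : fieldType) (G : zmodType) (le : rel G)
  (v : F -> option G) (V : vectType F) (U : {vspace V}) (alpha : V -> option G)
  : Prop :=
  [/\ (forall x, x \in U -> (alpha x = None <-> x = 0)),
      (forall (l : F) x, x \in U -> alpha (l *: x) = oadd (v l) (alpha x)),
      (forall x y, x \in U -> y \in U ->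
          ole le (omin le (alpha x) (alpha y)) (alpha (x + y))) &
      (exists e : (\dim U).-tuple V, basis_of U e /\
          forall l : 'I_(\dim U) -> F,
            alpha (\sum_(i < \dim U) l i *: e`_i)
            = ominI le (fun i => alpha (l i *: e`_i)))].

Definition compatible_on (F : fieldType) (G : zmodType) (le : rel G)
  (v : F -> option G) (V : vectType F) (U : {vspace V}) (q : V -> F)
  (alpha : V -> option G) (eps : G) : Prop :=
  [/\ (forall x y, x \in U -> y \in U ->
         ole le (oadd (oadd (alpha x) (alpha y)) (Some eps)) (v (polar q x y))),
      (forall x, x \in U -> ole le (oadd (alpha x) (alpha x)) (v (q x))) &
      (forall x, x \in U -> x != 0 -> exists2 y, y \in U &
         y != 0 /\ v (polar q x y) = oadd (oadd (alpha x) (alpha y)) (Some eps))].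

(* Main.v *)
Require Import Defs.
From HB Require Import structures.
From mathcomp Require Import all_boot all_order all_algebra ring.
Import GRing.Theory.
Local Open Scope ring_scope.

Lemma gle_refl {G : zmodType} {le : rel G} (hG : divisible_ordered_group le) {x} : le x x.
Proof. by case: hG. Qed.
Lemma gle_anti {G : zmodType} {le : rel G} (hG : divisible_ordered_group le) {x y} :
  le x y -> le y x -> x = y.
Proof. by case: hG => _ [h _]; apply: h. Qed.
Lemma gle_trans {G : zmodType} {le : rel G} (hG : divisible_ordered_group le) {x y z} :
  le x y -> le y z -> le x z.
Proof. by case: hG => _ [_ [h _]]; apply: h. Qed.
Lemma gle_total {G : zmodType} {le : rel G} (hG : divisible_ordered_group le) {x y} :
  le x y \/ le y x.
Proof. by case: hG => _ [_ [_ [h _]]]; apply: h. Qed.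
Lemma gle_addr {G : zmodType} {le : rel G} (hG : divisible_ordered_group le) {x y z} :
  le x y -> le (x + z) (y + z).
Proof. by case: hG => _ [_ [_ [_ [h _]]]]; apply: h. Qed.
Lemma gle_addr_canc {G : zmodType} {le : rel G} (hG : divisible_ordered_group le) {x y z} :
  le (x + z) (y + z) -> le x y.
Proof. move=> h; have := gle_addr hG (z:=- z) h. by rewrite !addrK. Qed.
Lemma gle_add2 {G : zmodType} {le : rel G} (hG : divisible_ordered_group le) {a b c d} :
  le a b -> le c d -> le (a + c) (b + d).
Proof.
move=> h1 h2; apply: (gle_trans hG (gle_addr hG (z:=c) h1)).
rewrite ![b + _]addrC; exact: gle_addr.
Qed.

Lemma ole_refl {G : zmodType} {le : rel G} (hG : divisible_ordered_group le) {a} : ole le a a.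
Proof. by case: a => //= x; apply: (gle_refl hG). Qed.
Lemma ole_trans {G : zmodType} {le : rel G} (hG : divisible_ordered_group le) {a b c} :
  ole le a b -> ole le b c -> ole le a c.
Proof. by case: a => [x|]; case: b => [y|]; case: c => [z|] //=; apply: gle_trans. Qed.
Lemma ole_anti {G : zmodType} {le : rel G} (hG : divisible_ordered_group le) {a b} :
  ole le a b -> ole le b a -> a = b.
Proof. by case: a => [x|]; case: b => [y|] //= h1 h2; rewrite (gle_anti hG h1 h2). Qed.
Lemma ole_total {G : zmodType} {le : rel G} (hG : divisible_ordered_group le) {a b} :
  ole le a b \/ ole le b a.
Proof. by case: a => [x|]; case: b => [y|] //=; auto; apply: gle_total. Qed.
Lemma ole_dec {G : zmodType} {le : rel G} a b : ole le a b \/ ~ ole le a b.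
Proof. by case: a => [x|]; case: b => [y|] //=; auto; case: (le x y); auto. Qed.
Lemma oleN {G : zmodType} {le : rel G} a : ole le a None.
Proof. by case: a. Qed.
Lemma oleNI {G : zmodType} {le : rel G} {a} : ole le None a -> a = None.
Proof. by case: a. Qed.
Lemma nole_ole {G : zmodType} {le : rel G} (hG : divisible_ordered_group le) {a b} :
  ~ ole le b a -> ole le a b.
Proof. by case: (ole_total hG (a:=a) (b:=b)) => // h1 h2. Qed.
Lemma nole_trans_l {G : zmodType} {le : rel G} (hG : divisible_ordered_group le) {a b c} :
  ole le a b -> ~ ole le c b -> ~ ole le c a.
Proof. by move=> h1 h2 h3; apply: h2; apply: ole_trans h1. Qed.
Lemma nole_trans_r {G : zmodType} {le : rel G} (hG : divisible_ordered_group le) {a b c} :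
  ~ ole le b a -> ole le b c -> ~ ole le c a.
Proof. by move=> h1 h2 h3; apply: h1; apply: ole_trans h3. Qed.
Lemma nole_neq {G : zmodType} {le : rel G} {a b} : ~ ole le b a -> a <> None.
Proof. by move=> h e; apply: h; rewrite e; apply: oleN. Qed.

Lemma oaddC {G : zmodType} (a b : option G) : oadd a b = oadd b a.
Proof. by case: a => [x|]; case: b => [y|] //=; rewrite addrC. Qed.
Lemma oaddA {G : zmodType} (a b c : option G) : oadd a (oadd b c) = oadd (oadd a b) c.
Proof. by case: a => [x|]; case: b => [y|]; case: c => [z|] //=; rewrite addrA. Qed.
Lemma oadd0l' {G : zmodType} (a : option G) : oadd (Some 0) a = a.
Proof. by case: a => //= x; rewrite add0r. Qed.
HB.instance Definition _ (G : zmodType) :=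
  Monoid.isComLaw.Build (option G) (Some 0) (@oadd G) oaddA oaddC oadd0l'.

Lemma oaddCA {G : zmodType} (a b c : option G) : oadd a (oadd b c) = oadd b (oadd a c).
Proof. by rewrite !oaddA (oaddC a). Qed.
Lemma oaddAC {G : zmodType} (a b c : option G) : oadd (oadd a b) c = oadd (oadd a c) b.
Proof. by rewrite -!oaddA (oaddC b). Qed.
Lemma oadd0 {G : zmodType} (a : option G) : oadd a (Some 0) = a.
Proof. by case: a => //= x; rewrite addr0. Qed.
Lemma oadd0l {G : zmodType} (a : option G) : oadd (Some 0) a = a.
Proof. by case: a => //= x; rewrite add0r. Qed.
Lemma oaddN {G : zmodType} (a : option G) : oadd a None = None.
Proof. by case: a. Qed.
Lemma oaddNl {G : zmodType} (a : option G) : oadd None a = None.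
Proof. by []. Qed.
Lemma oadd_eqN {G : zmodType} (a b : option G) : oadd a b = None -> a = None \/ b = None.
Proof. by case: a => [x|]; case: b => [y|] //=; auto. Qed.

Lemma ole_oadd {G : zmodType} {le : rel G} (hG : divisible_ordered_group le) {a b c d} :
  ole le a b -> ole le c d -> ole le (oadd a c) (oadd b d).
Proof.
by case: a => [x|]; case: b => [y|]; case: c => [z|]; case: d => [w|] //=; apply: gle_add2.
Qed.
Lemma ole_oaddr {G : zmodType} {le : rel G} (hG : divisible_ordered_group le) {a b c} :
  ole le a b -> ole le (oadd a c) (oadd b c).
Proof. by move=> h; apply: ole_oadd => //; apply: (ole_refl hG). Qed.
Lemma ole_oaddl {G : zmodType} {le : rel G} (hG : divisible_ordered_group le) {a b c} :
  ole le a b -> ole le (oadd c a) (oadd c b).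
Proof. by move=> h; apply: ole_oadd => //; apply: (ole_refl hG). Qed.
Lemma ole_oadd_canc {G : zmodType} {le : rel G} (hG : divisible_ordered_group le) {a b c} :
  c <> None -> ole le (oadd a c) (oadd b c) -> ole le a b.
Proof.
case: c => [z|] // _; case: a => [x|]; case: b => [y|] //= h; exact: gle_addr_canc h.
Qed.
Lemma ole_oadd_cancl {G : zmodType} {le : rel G} (hG : divisible_ordered_group le) {a b c} :
  c <> None -> ole le (oadd c a) (oadd c b) -> ole le a b.
Proof. rewrite !(oaddC c); exact: ole_oadd_canc. Qed.
Lemma nole_oaddr {G : zmodType} {le : rel G} (hG : divisible_ordered_group le) {a b c} :
  ~ ole le b a -> c <> None -> ~ ole le (oadd b c) (oadd a c).
Proof. by move=> h hc h'; apply: h; apply: ole_oadd_canc h'. Qed.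
Lemma nole_oadd {G : zmodType} {le : rel G} (hG : divisible_ordered_group le) {a b c d} :
  ~ ole le b a -> ole le c d -> c <> None -> ~ ole le (oadd b d) (oadd a c).
Proof.
move=> h1 h2 h3; apply: (nole_trans_r hG (nole_oaddr hG h1 h3)).
exact: ole_oaddl.
Qed.

Lemma ole_minl {G : zmodType} {le : rel G} (hG : divisible_ordered_group le) {a b} :
  ole le (omin le a b) a.
Proof.
case: a => [x|]; case: b => [y|] //=; last exact: (gle_refl hG).
case E: (le x y) => /=; first exact: (gle_refl hG).
by case: (gle_total hG (x:=x) (y:=y)); rewrite ?E.
Qed.
Lemma ole_minr {G : zmodType} {le : rel G} (hG : divisible_ordered_group le) {a b} :
  ole le (omin le a b) b.
Proof.
case: a => [x|]; case: b => [y|] //=; last exact: (gle_refl hG).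
by case E: (le x y) => //=; apply: (gle_refl hG).
Qed.
Lemma ole_min {G : zmodType} {le : rel G} {a b m} :
  ole le m a -> ole le m b -> ole le m (omin le a b).
Proof. by case: a => [x|]; case: b => [y|] //=; case: (le x y). Qed.
Lemma omin_l {G : zmodType} {le : rel G} (hG : divisible_ordered_group le) {a b} :
  ole le a b -> omin le a b = a.
Proof.
move=> h; apply: (ole_anti hG); first exact: (ole_minl hG).
apply: ole_min => //; exact: (ole_refl hG).
Qed.
Lemma omin_r {G : zmodType} {le : rel G} (hG : divisible_ordered_group le) {a b} :
  ole le b a -> omin le a b = b.
Proof.
move=> h; apply: (ole_anti hG); first exact: (ole_minr hG).
apply: ole_min => //; exact: (ole_refl hG).
Qed.

Lemma foldr_omin_le {G : zmodType} {le : rel G} (hG : divisible_ordered_group le)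
  (s : seq (option G)) x : x \in s -> ole le (foldr (omin le) None s) x.
Proof.
elim: s => //= a s IH; rewrite inE => /orP[/eqP->|h]; first exact: (ole_minl hG).
exact: (ole_trans hG (ole_minr hG) (IH h)).
Qed.
Lemma foldr_omin_ge {G : zmodType} {le : rel G} (s : seq (option G)) m :
  (forall x, x \in s -> ole le m x) -> ole le m (foldr (omin le) None s).
Proof.
elim: s => [|a s IH] h /=; first exact: oleN.
apply: ole_min; first by apply: h; rewrite inE eqxx.
by apply: IH => x hx; apply: h; rewrite inE hx orbT.
Qed.
Lemma ominI_le {G : zmodType} {le : rel G} (hG : divisible_ordered_group le) n
  (f : 'I_n -> option G) i : ole le (ominI le f) (f i).
Proof. apply: foldr_omin_le => //; apply: map_f; exact: mem_enum. Qed.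
Lemma ominI_ge {G : zmodType} {le : rel G} n (f : 'I_n -> option G) m :
  (forall i, ole le m (f i)) -> ole le m (ominI le f).
Proof. move=> h; apply: foldr_omin_ge => x /mapP [i _ ->]; exact: h. Qed.

Definition ultra {G : zmodType} (le : rel G) {X : zmodType} (N : X -> option G) :=
  forall x y, ole le (omin le (N x) (N y)) (N (x + y)).

Lemma ultra_ge {G : zmodType} {le : rel G} (hG : divisible_ordered_group le)
  {X : zmodType} {N : X -> option G} (hN : ultra le N) {m x y} :
  ole le m (N x) -> ole le m (N y) -> ole le m (N (x + y)).
Proof. move=> h1 h2; apply: (ole_trans hG _ (hN x y)); exact: ole_min. Qed.

Lemma ultra_sum {G : zmodType} {le : rel G} (hG : divisible_ordered_group le)
  {X : zmodType} {N : X -> option G} (hN : ultra le N) (h0 : N 0 = None)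
  {I : Type} (r : seq I) (P : pred I) (f : I -> X) m :
  (forall i, P i -> ole le m (N (f i))) -> ole le m (N (\sum_(i <- r | P i) f i)).
Proof.
move=> h; apply: (big_ind (fun x => ole le m (N x))) => //.
- by rewrite h0; apply: oleN.
- by move=> x y; apply: ultra_ge.
Qed.

Lemma ultra_strict {G : zmodType} {le : rel G} (hG : divisible_ordered_group le)
  {X : zmodType} {N : X -> option G} (hN : ultra le N) (hNN : forall x, N (- x) = N x)
  {x y} : ~ ole le (N y) (N x) -> N (x + y) = N x.
Proof.
move=> hlt; have hxy : ole le (N x) (N y) by apply: nole_ole.
have h1 : ole le (N x) (N (x + y)).
  by apply: ultra_ge => //; apply: (ole_refl hG).
apply: (ole_anti hG) => //.
have h2 := hN (x + y) (- y); rewrite addrK hNN in h2.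
case: (ole_dec (le:=le) (N (x + y)) (N y)) => h3.
  apply: (ole_trans hG); last exact: h2.
  by rewrite (omin_l hG h3); apply: (ole_refl hG).
exfalso; apply: hlt; apply: (ole_trans hG); last exact: h2.
rewrite (omin_r hG (nole_ole hG h3)); exact: (ole_refl hG).
Qed.

Definition NHyp {G : zmodType} (le : rel G) {F : fieldType} (v : F -> option G)
  {V : vectType F} (alpha : V -> option G) :=
  [/\ divisible_ordered_group le, valuation le v & vnorm_on le v fullv alpha].


Lemma NhG {G : zmodType} {le : rel G} {F : fieldType} {v : F -> option G}
  {V : vectType F} {alpha : V -> option G} (h : NHyp le v alpha) :
  divisible_ordered_group le.
Proof. by case: h. Qed.

Lemma v0E {G : zmodType} {le : rel G} {F : fieldType} {v : F -> option G}
  {V : vectType F} {alpha : V -> option G} (h : NHyp le v alpha) x :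
  (v x = None) <-> x = 0.
Proof. by case: h => _ [h1 _ _] _; apply: h1. Qed.

Lemma v0 {G : zmodType} {le : rel G} {F : fieldType} {v : F -> option G}
  {V : vectType F} {alpha : V -> option G} (h : NHyp le v alpha) : v 0 = None.
Proof. by apply/(v0E h). Qed.

Lemma vM {G : zmodType} {le : rel G} {F : fieldType} {v : F -> option G}
  {V : vectType F} {alpha : V -> option G} (h : NHyp le v alpha) x y :
  v (x * y) = oadd (v x) (v y).
Proof. by case: h => _ [_ h2 _] _; apply: h2. Qed.

Lemma v_ultra {G : zmodType} {le : rel G} {F : fieldType} {v : F -> option G}
  {V : vectType F} {alpha : V -> option G} (h : NHyp le v alpha) : ultra le v.
Proof. by case: h => _ [_ _ h3] _. Qed.

Lemma v1 {G : zmodType} {le : rel G} {F : fieldType} {v : F -> option G}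
  {V : vectType F} {alpha : V -> option G} (h : NHyp le v alpha) : v 1 = Some 0.
Proof.
have := vM h 1 1; rewrite mulr1.
case E: (v 1) => [g|] /=; last by move: E => /(v0E h) /eqP; rewrite oner_eq0.
case=> e; congr Some; have := congr1 (fun t => t - g) e; rewrite addrK subrr => ->.
done.
Qed.

Lemma vN1 {G : zmodType} {le : rel G} {F : fieldType} {v : F -> option G}
  {V : vectType F} {alpha : V -> option G} (h : NHyp le v alpha) : v (-1) = Some 0.
Proof.
have hG := NhG h.
have := vM h (-1) (-1); rewrite mulrNN mulr1 (v1 h).
case E: (v (-1)) => [g|] //= [e].
have e' : g + g = 0 by rewrite e.
congr Some; case: (gle_total hG (x:=g) (y:=0)) => hg.
- apply: (gle_anti hG) => //; have := gle_addr hG (z:=g) hg.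
  by rewrite e' add0r.
- apply: (gle_anti hG) => //; have := gle_addr hG (z:=g) hg.
  by rewrite e' add0r.
Qed.

Lemma vN {G : zmodType} {le : rel G} {F : fieldType} {v : F -> option G}
  {V : vectType F} {alpha : V -> option G} (h : NHyp le v alpha) x : v (- x) = v x.
Proof. by rewrite -mulN1r (vM h) (vN1 h) oadd0l. Qed.

Lemma a0E {G : zmodType} {le : rel G} {F : fieldType} {v : F -> option G}
  {V : vectType F} {alpha : V -> option G} (h : NHyp le v alpha) x :
  (alpha x = None) <-> x = 0.
Proof. by case: h => _ _ [h1 _ _ _]; apply: h1; rewrite memvf. Qed.

Lemma a0 {G : zmodType} {le : rel G} {F : fieldType} {v : F -> option G}
  {V : vectType F} {alpha : V -> option G} (h : NHyp le v alpha) : alpha 0 = None.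
Proof. by apply/(a0E h). Qed.

Lemma aZ {G : zmodType} {le : rel G} {F : fieldType} {v : F -> option G}
  {V : vectType F} {alpha : V -> option G} (h : NHyp le v alpha) l x :
  alpha (l *: x) = oadd (v l) (alpha x).
Proof. by case: h => _ _ [_ h2 _ _]; apply: h2; rewrite memvf. Qed.

Lemma a_ultra {G : zmodType} {le : rel G} {F : fieldType} {v : F -> option G}
  {V : vectType F} {alpha : V -> option G} (h : NHyp le v alpha) : ultra le alpha.
Proof. by case: h => _ _ [_ _ h3 _] x y; apply: h3; rewrite memvf. Qed.

Lemma aN {G : zmodType} {le : rel G} {F : fieldType} {v : F -> option G}
  {V : vectType F} {alpha : V -> option G} (h : NHyp le v alpha) x :
  alpha (- x) = alpha x.
Proof. by rewrite -scaleN1r (aZ h) (vN1 h) oadd0l. Qed.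

Lemma a_neq0 {G : zmodType} {le : rel G} {F : fieldType} {v : F -> option G}
  {V : vectType F} {alpha : V -> option G} (h : NHyp le v alpha) x :
  x != 0 -> alpha x <> None.
Proof. by move=> /eqP hx /(a0E h). Qed.

Lemma v_neq0 {G : zmodType} {le : rel G} {F : fieldType} {v : F -> option G}
  {V : vectType F} {alpha : V -> option G} (h : NHyp le v alpha) x :
  x != 0 -> v x <> None.
Proof. by move=> /eqP hx /(v0E h). Qed.

Lemma polarC {F : fieldType} {V : vectType F} (q : V -> F) x y : polar q x y = polar q y x.
Proof. by rewrite /polar [y + x]addrC addrAC. Qed.

Lemma polarDl {F : fieldType} {V : vectType F} {q : V -> F} (hq : quadratic_form q) x y z :
  polar q (x + y) z = polar q x z + polar q y z.
Proof. by case: hq => _ h; have := h 1 x y z; rewrite scale1r mul1r. Qed.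

Lemma polar0l {F : fieldType} {V : vectType F} {q : V -> F} (hq : quadratic_form q) z :
  polar q 0 z = 0.
Proof.
have := polarDl hq 0 0 z; rewrite addr0 => e.
by apply: (@addrI _ (polar q 0 z)); rewrite addr0 -e.
Qed.

Lemma polarZl {F : fieldType} {V : vectType F} {q : V -> F} (hq : quadratic_form q) a x z :
  polar q (a *: x) z = a * polar q x z.
Proof. by have := hq.2 a x 0 z; rewrite addr0 (polar0l hq) addr0. Qed.

Lemma polarNl {F : fieldType} {V : vectType F} {q : V -> F} (hq : quadratic_form q) x z :
  polar q (- x) z = - polar q x z.
Proof. by rewrite -scaleN1r (polarZl hq) mulN1r. Qed.

Lemma polarBl {F : fieldType} {V : vectType F} {q : V -> F} (hq : quadratic_form q) x y z :
  polar q (x - y) z = polar q x z - polar q y z.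
Proof. by rewrite (polarDl hq) (polarNl hq). Qed.

Lemma polarDr {F : fieldType} {V : vectType F} {q : V -> F} (hq : quadratic_form q) x y z :
  polar q z (x + y) = polar q z x + polar q z y.
Proof. by rewrite !(polarC q z) (polarDl hq). Qed.

Lemma polarZr {F : fieldType} {V : vectType F} {q : V -> F} (hq : quadratic_form q) a x z :
  polar q z (a *: x) = a * polar q z x.
Proof. by rewrite !(polarC q z) (polarZl hq). Qed.

Lemma polar0r {F : fieldType} {V : vectType F} {q : V -> F} (hq : quadratic_form q) z :
  polar q z 0 = 0.
Proof. by rewrite polarC (polar0l hq). Qed.

Lemma polarNr {F : fieldType} {V : vectType F} {q : V -> F} (hq : quadratic_form q) x z :
  polar q z (- x) = - polar q z x.
Proof. by rewrite !(polarC q z) (polarNl hq). Qed.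

Lemma polarBr {F : fieldType} {V : vectType F} {q : V -> F} (hq : quadratic_form q) x y z :
  polar q z (x - y) = polar q z x - polar q z y.
Proof. by rewrite (polarDr hq) (polarNr hq). Qed.

Lemma polarxx {F : fieldType} {V : vectType F} {q : V -> F} (hq : quadratic_form q) x :
  polar q x x = 2 * q x.
Proof.
case: hq => h1 _; rewrite /polar -mulr2n -scaler_nat h1.
ring.
Qed.

Definition QHyp {G : zmodType} (le : rel G) {F : fieldType} (v : F -> option G)
  {V : vectType F} (alpha : V -> option G) (q : V -> F) (eps : G) :=
  [/\ NHyp le v alpha, quadratic_form q, compatible_on le v fullv q alpha eps
      & ~ ole le (v 2) (Some eps)].

Definition ns {G : zmodType} (le : rel G) {F : fieldType} {V : vectType F}
  (alpha : V -> option G) (A B : {vspace V}) :=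
  forall a b, a \in A -> b \in B -> ole le (alpha (a + b)) (alpha a).

Fixpoint sseq {G : zmodType} (le : rel G) {F : fieldType} {V : vectType F}
  (alpha : V -> option G) (s : seq V) : Prop :=
  match s with
  | [::] => True
  | a :: s' => a != 0 /\ ns le alpha <[a]> <<s'>> /\ sseq le alpha s'
  end.

Lemma ns_r {G : zmodType} {le : rel G} {F : fieldType} {v : F -> option G}
  {V : vectType F} {alpha : V -> option G} (h : NHyp le v alpha) {A B a b} :
  ns le alpha A B -> a \in A -> b \in B -> ole le (alpha (a + b)) (alpha b).
Proof.
move=> hn ha hb; have hG := NhG h.
have e : b = (a + b) + - a by rewrite addrC addKr.
rewrite {2}e; apply: (ultra_ge hG (a_ultra h)); first exact: (ole_refl hG).
by rewrite (aN h); apply: hn.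
Qed.

Lemma ns_mono {G : zmodType} {le : rel G} {F : fieldType} {V : vectType F}
  {alpha : V -> option G} {A B A' B' : {vspace V}} :
  ns le alpha A B -> (A' <= A)%VS -> (B' <= B)%VS -> ns le alpha A' B'.
Proof. by move=> hn /subvP hA /subvP hB a b ha hb; apply: hn; [apply: hA|apply: hB]. Qed.

Lemma ole_a_le_l {G : zmodType} {le : rel G} {F : fieldType} {v : F -> option G}
  {V : vectType F} {alpha : V -> option G} (h : NHyp le v alpha) {a b} :
  ole le (alpha a) (alpha b) -> ole le (alpha a) (alpha (a + b)).
Proof.
move=> hab; apply: (ultra_ge (NhG h) (a_ultra h)) hab; exact: (ole_refl (NhG h)).
Qed.

Lemma ns_eq {G : zmodType} {le : rel G} {F : fieldType} {v : F -> option G}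
  {V : vectType F} {alpha : V -> option G} (h : NHyp le v alpha) {A B a b} :
  ns le alpha A B -> a \in A -> b \in B -> ole le (alpha a) (alpha b) ->
  alpha (a + b) = alpha a.
Proof.
move=> hn ha hb hab; apply: (ole_anti (NhG h)); first exact: hn.
exact: (ole_a_le_l h).
Qed.

Lemma span_cons_mem {F : fieldType} {V : vectType F} (x : V) s u :
  u \in <<x :: s>>%VS -> exists k, exists2 w, w \in <<s>>%VS & u = k *: x + w.
Proof.
rewrite span_cons => /memv_addP [a /vlineP [k ->] [w hw ->]].
by exists k; exists w.
Qed.

Lemma mem_span_cons {F : fieldType} {V : vectType F} (x : V) s k w :
  w \in <<s>>%VS -> k *: x + w \in <<x :: s>>%VS.
Proof.
move=> hw; rewrite span_cons; apply/memv_addP; exists (k *: x) => //.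
  by apply: memvZ; apply: memv_line.
by exists w.
Qed.

Lemma span_cons_sub {F : fieldType} {V : vectType F} (x : V) s (U : {vspace V}) :
  (<<x :: s>> <= U)%VS = (x \in U) && (<<s>> <= U)%VS.
Proof. by rewrite span_cons subv_add memvE. Qed.

Lemma sub_span_cons {F : fieldType} {V : vectType F} (x : V) s :
  (<<s>> <= <<x :: s>>)%VS.
Proof. by rewrite span_cons addvSr. Qed.

Lemma mem_span_head {F : fieldType} {V : vectType F} (x : V) s :
  x \in <<x :: s>>%VS.
Proof. by apply: memv_span; rewrite inE eqxx. Qed.

Lemma EX {G : zmodType} {le : rel G} {F : fieldType} {v : F -> option G}
  {V : vectType F} {alpha : V -> option G} (h : NHyp le v alpha) (s : seq V) :
  forall y, sseq le alpha s -> y \in <<s>>%VS -> y != 0 ->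
  exists t, [/\ sseq le alpha (y :: t), <<y :: t>>%VS = <<s>>%VS & size t = (size s).-1].
Proof.
have hG := NhG h.
elim: s => [|b r IH] y hs hy hy0.
  by rewrite span_nil memv0 in hy; rewrite hy in hy0.
case: hs => [hb0 [hbr hr]].
case/span_cons_mem: hy => k [z hz ey].
have hkb : k *: b \in <[b]>%VS by apply: memvZ; apply: memv_line.
case: (ole_dec (le:=le) (alpha (k *: b)) (alpha z)) => hc.
- have hay : alpha y = alpha (k *: b) by rewrite ey (ns_eq h hbr).
  have k0 : k != 0.
    apply/eqP => k0; move: hay; rewrite k0 scale0r (a0 h) => /(a0E h) y0.
    by rewrite y0 eqxx in hy0.
  exists r; split => //.
  + split => //; split => //.
    move=> u w /vlineP [l ->] hw.
    rewrite (aZ h) hay -(aZ h) ey scalerDr -addrA.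
    apply: hbr => //; first by apply: memvZ.
    by apply: memvD => //; apply: memvZ.
  + apply: subv_anti; apply/andP; split.
    * rewrite span_cons_sub sub_span_cons andbT ey.
      exact: mem_span_cons.
    * rewrite span_cons_sub sub_span_cons andbT.
      have -> : b = k^-1 *: y + (- (k^-1 *: z)).
        by rewrite ey scalerDr scalerA mulVf // scale1r addrK.
      by apply: mem_span_cons; rewrite memvN; apply: memvZ.
- have hay : alpha y = alpha z.
    by rewrite ey addrC; apply: (ultra_strict hG (a_ultra h) (aN h)).
  have z0 : z != 0 by apply/eqP => z0; apply: (nole_neq hc); rewrite z0 (a0 h).
  have [t' [[_ [hzt ht']] ezt st']] := IH z hr hz z0.
  have ht'r : (<<t'>> <= <<r>>)%VS by rewrite -ezt sub_span_cons.
  exists (b :: t'); split.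
  + split => //; split; last first.
      split => //; split => //; exact: (ns_mono hbr (subvv _) ht'r).
    move=> u w /vlineP [l ->] /span_cons_mem [m [w' hw' ->]].
    have -> : l *: y + (m *: b + w') = (l * k + m) *: b + (l *: z + w').
      by rewrite ey scalerDr scalerDl scalerA addrACA.
    have hlz : l *: z + w' \in <<r>>%VS.
      by apply: memvD; [apply: memvZ | apply: (subvP ht'r)].
    apply: (ole_trans hG (ns_r h hbr _ hlz)).
      by apply: memvZ; apply: memv_line.
    rewrite (aZ h l y) hay -(aZ h).
    apply: hzt => //; first by apply: memvZ; apply: memv_line.
  + apply: subv_anti; apply/andP; split.
    * rewrite span_cons_sub span_cons_sub ey.
      rewrite mem_span_cons //= mem_span_head /=.
      apply: (subv_trans ht'r); exact: sub_span_cons.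
    * rewrite span_cons_sub -ezt span_cons_sub.
      rewrite (subv_trans _ (sub_span_cons _ _)); last exact: sub_span_cons.
      rewrite andbT.
      have hb : b \in <<y :: b :: t'>>%VS.
        by apply: (subvP (sub_span_cons _ _)); apply: mem_span_head.
      rewrite hb /=.
      have -> : z = y - k *: b by rewrite ey addrC addKr.
      apply: memvB; first exact: mem_span_head.
      by apply: memvZ.
  + have rne : r != [::].
      by apply/eqP => er; move: hz; rewrite er span_nil memv0 => hz; rewrite hz in z0.
    by rewrite /= st' prednK // lt0n size_eq0.
Qed.

Lemma QN {G : zmodType} {le : rel G} {F : fieldType} {v : F -> option G}
  {V : vectType F} {alpha : V -> option G} {q : V -> F} {eps : G}
  (hQ : QHyp le v alpha q eps) : NHyp le v alpha.
Proof. by case: hQ. Qed.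
Lemma Qq {G : zmodType} {le : rel G} {F : fieldType} {v : F -> option G}
  {V : vectType F} {alpha : V -> option G} {q : V -> F} {eps : G}
  (hQ : QHyp le v alpha q eps) : quadratic_form q.
Proof. by case: hQ. Qed.
Lemma Qeps {G : zmodType} {le : rel G} {F : fieldType} {v : F -> option G}
  {V : vectType F} {alpha : V -> option G} {q : V -> F} {eps : G}
  (hQ : QHyp le v alpha q eps) : ~ ole le (v 2) (Some eps).
Proof. by case: hQ. Qed.
Lemma cA {G : zmodType} {le : rel G} {F : fieldType} {v : F -> option G}
  {V : vectType F} {alpha : V -> option G} {q : V -> F} {eps : G}
  (hQ : QHyp le v alpha q eps) x y :
  ole le (oadd (oadd (alpha x) (alpha y)) (Some eps)) (v (polar q x y)).
Proof. by case: hQ => _ _ [h _ _] _; apply: h; rewrite memvf. Qed.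
Lemma cB {G : zmodType} {le : rel G} {F : fieldType} {v : F -> option G}
  {V : vectType F} {alpha : V -> option G} {q : V -> F} {eps : G}
  (hQ : QHyp le v alpha q eps) x :
  ole le (oadd (alpha x) (alpha x)) (v (q x)).
Proof. by case: hQ => _ _ [_ h _] _; apply: h; rewrite memvf. Qed.
Lemma vpxx {G : zmodType} {le : rel G} {F : fieldType} {v : F -> option G}
  {V : vectType F} {alpha : V -> option G} {q : V -> F} {eps : G}
  (hQ : QHyp le v alpha q eps) x :
  ole le (oadd (v 2) (oadd (alpha x) (alpha x))) (v (polar q x x)).
Proof.
rewrite (polarxx (Qq hQ)) (vM (QN hQ)); apply: (ole_oaddl (NhG (QN hQ))); exact: (cB hQ).
Qed.
Lemma eps_le2 {G : zmodType} {le : rel G} {F : fieldType} {v : F -> option G}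
  {V : vectType F} {alpha : V -> option G} {q : V -> F} {eps : G}
  (hQ : QHyp le v alpha q eps) : ole le (Some eps) (v 2).
Proof. exact: (nole_ole (NhG (QN hQ)) (Qeps hQ)). Qed.

Definition cpair {G : zmodType} (le : rel G) {F : fieldType} (v : F -> option G)
  {V : vectType F} (alpha : V -> option G) (q : V -> F) (eps : G) (x y : V) :=
  [/\ x != 0, y != 0 & v (polar q x y) = oadd (oadd (alpha x) (alpha y)) (Some eps)].

Definition Dd {F : fieldType} {V : vectType F} (q : V -> F) x y :=
  polar q x x * polar q y y - polar q x y ^+ 2.

Lemma omin_cases {G : zmodType} (le : rel G) (a b : option G) :
  omin le a b = a \/ omin le a b = b.
Proof. by case: a => [x|]; case: b => [y|] /=; auto; case: (le x y); auto. Qed.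

Lemma vD {G : zmodType} {le : rel G} {F : fieldType} {v : F -> option G}
  {V : vectType F} {alpha : V -> option G} {q : V -> F} {eps : G}
  (hQ : QHyp le v alpha q eps) {x y} : cpair le v alpha q eps x y ->
  v (Dd q x y) = oadd (v (polar q x y)) (v (polar q x y)).
Proof.
case=> hx hy hc; have hN := QN hQ; have hG := NhG hN.
have hS : oadd (alpha x) (alpha y) <> None.
  by move/oadd_eqN => []; [exact: (a_neq0 hN _ hx) | exact: (a_neq0 hN _ hy)].
rewrite /Dd addrC (ultra_strict hG (v_ultra hN) (vN hN)) (vN hN) expr2 [v (polar q x y * _)](vM hN) //.
set X := v (polar q x y).
set Y := oadd (v 2) (oadd (alpha x) (alpha y)).
have hXY : ~ ole le Y X.
  rewrite /X hc /Y [oadd (oadd _ _) (Some eps)]oaddC; exact: (nole_oaddr hG (Qeps hQ) hS).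
have hX : X <> None by rewrite /X hc; move/oadd_eqN => [].
have h1 := nole_oadd hG hXY (nole_ole hG hXY) hX.
apply: (nole_trans_r hG h1); rewrite (vM hN).
have h2 := ole_oadd hG (vpxx hQ x) (vpxx hQ y).
apply: (ole_trans hG _ h2); rewrite /Y.
by rewrite (AC ((1*2)*(1*2)) ((1*(2*5))*(4*(3*6)))); exact: (ole_refl hG).
Qed.

Lemma D_neq0 {G : zmodType} {le : rel G} {F : fieldType} {v : F -> option G}
  {V : vectType F} {alpha : V -> option G} {q : V -> F} {eps : G}
  (hQ : QHyp le v alpha q eps) {x y} : cpair le v alpha q eps x y ->
  v (Dd q x y) <> None.
Proof.
move=> hp; rewrite (vD hQ hp); case: hp => hx hy hc; rewrite hc.
have hS : oadd (alpha x) (alpha y) <> None.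
  by move/oadd_eqN => []; [exact: (a_neq0 (QN hQ) _ hx) | exact: (a_neq0 (QN hQ) _ hy)].
have hvc : oadd (oadd (alpha x) (alpha y)) (Some eps) <> None by move/oadd_eqN => [].
by move/oadd_eqN => [].
Qed.

Lemma KEY {G : zmodType} {le : rel G} {F : fieldType} {v : F -> option G}
  {V : vectType F} {alpha : V -> option G} {q : V -> F} {eps : G}
  (hQ : QHyp le v alpha q eps) {x y} : cpair le v alpha q eps x y ->
  forall z a b,
  polar q (z - (a *: x + b *: y)) x = 0 -> polar q (z - (a *: x + b *: y)) y = 0 ->
  ole le (alpha z) (alpha (a *: x)).
Proof.
move=> hp z a b h1 h2.
have hN := QN hQ; have hG := NhG hN; have hq := Qq hQ.
have e1 : polar q z x = a * polar q x x + b * polar q x y.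
  move: h1; rewrite (polarBl hq) (polarDl hq) !(polarZl hq) (polarC q y x).
  by move/eqP; rewrite subr_eq0 => /eqP.
have e2 : polar q z y = a * polar q x y + b * polar q y y.
  move: h2; rewrite (polarBl hq) (polarDl hq) !(polarZl hq).
  by move/eqP; rewrite subr_eq0 => /eqP.
have ea : a * Dd q x y = polar q y y * polar q z x - polar q x y * polar q z y.
  by rewrite /Dd e1 e2; ring.
have hD := D_neq0 hQ hp.
rewrite (aZ hN); apply: (ole_oadd_canc hG hD).
have -> : oadd (oadd (v a) (alpha x)) (v (Dd q x y)) = oadd (alpha x) (v (a * Dd q x y)).
  by rewrite (vM hN) (AC (2*1) (2*(1*3))).
rewrite ea; apply: (ole_trans hG); last first.
  apply: (ole_oaddl hG); apply: (v_ultra hN).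
rewrite (vN hN) (vD hQ hp).
case: hp => hx hy hc.
case: (omin_cases le (v (polar q y y * polar q z x)) (v (polar q x y * polar q z y))) => ->.
- rewrite (vM hN); apply: (ole_trans hG); last first.
    apply: (ole_oaddl hG); apply: (ole_oadd hG); last exact: (cA hQ z x).
    apply: (ole_trans hG); last exact: (vpxx hQ y).
    apply: (ole_oaddr hG); exact: (eps_le2 hQ).
  rewrite hc (AC (1*(3*3)) (2*((4*(3*6))*((1*5)*7)))).
  exact: (ole_refl hG).
- rewrite (vM hN); apply: (ole_trans hG); last first.
    apply: (ole_oaddl hG); apply: (ole_oaddl hG); exact: (cA hQ z y).
  rewrite {2}hc (AC (1*(1*3)) (3*(2*((1*4)*5)))).
  exact: (ole_refl hG).
Qed.

Definition Pa {F : fieldType} {V : vectType F} (q : V -> F) x y z :=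
  (polar q y y * polar q z x - polar q x y * polar q z y) / Dd q x y.
Definition Pb {F : fieldType} {V : vectType F} (q : V -> F) x y z :=
  (polar q x x * polar q z y - polar q x y * polar q z x) / Dd q x y.
Definition Pp {F : fieldType} {V : vectType F} (q : V -> F) x y z :=
  z - (Pa q x y z *: x + Pb q x y z *: y).

Lemma P_orth_x {F : fieldType} {V : vectType F} {q : V -> F} (hq : quadratic_form q) x y z :
  Dd q x y != 0 -> polar q (Pp q x y z) x = 0.
Proof.
move=> hD; rewrite /Pp (polarBl hq) (polarDl hq) !(polarZl hq) (polarC q y x) /Pa /Pb.
by apply/eqP; rewrite subr_eq0; apply/eqP; move: hD; rewrite /Dd => hD; field.
Qed.

Lemma P_orth_y {F : fieldType} {V : vectType F} {q : V -> F} (hq : quadratic_form q) x y z :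
  Dd q x y != 0 -> polar q (Pp q x y z) y = 0.
Proof.
move=> hD; rewrite /Pp (polarBl hq) (polarDl hq) !(polarZl hq) /Pa /Pb.
by apply/eqP; rewrite subr_eq0; apply/eqP; move: hD; rewrite /Dd => hD; field.
Qed.

Lemma Pa_lin {F : fieldType} {V : vectType F} {q : V -> F} (hq : quadratic_form q) x y k u w :
  Pa q x y (k *: u + w) = k * Pa q x y u + Pa q x y w.
Proof. rewrite /Pa !(polarDl hq) !(polarZl hq); rewrite !mulrDr; ring. Qed.

Lemma Pb_lin {F : fieldType} {V : vectType F} {q : V -> F} (hq : quadratic_form q) x y k u w :
  Pb q x y (k *: u + w) = k * Pb q x y u + Pb q x y w.
Proof. rewrite /Pb !(polarDl hq) !(polarZl hq); rewrite !mulrDr; ring. Qed.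

Lemma P_lin {F : fieldType} {V : vectType F} {q : V -> F} (hq : quadratic_form q) x y k u w :
  Pp q x y (k *: u + w) = k *: Pp q x y u + Pp q x y w.
Proof.
rewrite /Pp (Pa_lin hq) (Pb_lin hq) !scalerDl -!scalerA scalerBr scalerDr.
rewrite !opprD !addrA; congr (_ + _); rewrite -!addrA; congr (_ + _).
rewrite addrC -!addrA; congr (_ + _); rewrite addrCA; congr (_ + _).
by rewrite addrC.
Qed.

Lemma P0 {F : fieldType} {V : vectType F} {q : V -> F} (hq : quadratic_form q) x y :
  Pp q x y 0 = 0.
Proof. by rewrite /Pp /Pa /Pb !(polar0l hq) !mulr0 subr0 mul0r !scale0r addr0 subr0. Qed.

Lemma span_map_P {F : fieldType} {V : vectType F} {q : V -> F} (hq : quadratic_form q) x y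
  (t : seq V) w' : w' \in <<map (Pp q x y) t>>%VS ->
  exists2 w, w \in <<t>>%VS & w' = Pp q x y w.
Proof.
elim: t w' => [|f t IH] w' /=.
  by rewrite span_nil memv0 => /eqP ->; exists 0; rewrite ?mem0v ?(P0 hq).
case/span_cons_mem => k [w'' /IH [w hw ->] ->].
exists (k *: f + w); first exact: mem_span_cons.
by rewrite (P_lin hq).
Qed.

Lemma cpair_sym {G : zmodType} {le : rel G} {F : fieldType} {v : F -> option G}
  {V : vectType F} {alpha : V -> option G} {q : V -> F} {eps : G} {x y} :
  cpair le v alpha q eps x y -> cpair le v alpha q eps y x.
Proof. by case=> hx hy hc; split => //; rewrite polarC hc (oaddC (alpha x)). Qed.

Lemma KEY2 {G : zmodType} {le : rel G} {F : fieldType} {v : F -> option G}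
  {V : vectType F} {alpha : V -> option G} {q : V -> F} {eps : G}
  (hQ : QHyp le v alpha q eps) {x y} : cpair le v alpha q eps x y ->
  forall z a b,
  polar q (z - (a *: x + b *: y)) x = 0 -> polar q (z - (a *: x + b *: y)) y = 0 ->
  ole le (alpha z) (alpha (a *: x + b *: y)).
Proof.
move=> hp z a b h1 h2; have hN := QN hQ; have hG := NhG hN.
apply: (ultra_ge hG (a_ultra hN)); first exact: (KEY hQ hp z a b h1 h2).
apply: (KEY hQ (cpair_sym hp) z b a); by rewrite [b *: y + _]addrC.
Qed.

Lemma P_iso {G : zmodType} {le : rel G} {F : fieldType} {v : F -> option G}
  {V : vectType F} {alpha : V -> option G} {q : V -> F} {eps : G}
  (hQ : QHyp le v alpha q eps) {x y} t : cpair le v alpha q eps x y ->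
  sseq le alpha (x :: y :: t) -> forall u, u \in <<t>>%VS ->
  alpha (Pp q x y u) = alpha u.
Proof.
move=> hp [_ [hxyt [_ [hyt _]]]] u hu.
have hN := QN hQ; have hG := NhG hN; have hq := Qq hQ.
have hD : Dd q x y != 0 by apply/eqP => e; apply: (D_neq0 hQ hp); rewrite e (v0 hN).
apply: (ole_anti hG).
- have -> : Pp q x y u = (- Pa q x y u) *: x + ((- Pb q x y u) *: y + u).
    by rewrite /Pp opprD !scaleNr addrC addrA.
  apply: (ole_trans hG (ns_r hN hxyt _ _)).
  + by apply: memvZ; apply: memv_line.
  + by apply: mem_span_cons.
  apply: (ns_r hN hyt) => //; by apply: memvZ; apply: memv_line.
- rewrite /Pp; apply: (ultra_ge hG (a_ultra hN)); first exact: (ole_refl hG).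
  rewrite (aN hN); apply: (KEY2 hQ hp).
  + by rewrite -/(Pp q x y u); apply: P_orth_x.
  + by rewrite -/(Pp q x y u); apply: P_orth_y.
Qed.

Lemma mem_span_map_P {F : fieldType} {V : vectType F} {q : V -> F} (hq : quadratic_form q) x y
  (t : seq V) w : w \in <<t>>%VS -> Pp q x y w \in <<map (Pp q x y) t>>%VS.
Proof.
elim: t w => [|f t IH] w /=.
  by rewrite span_nil memv0 => /eqP ->; rewrite (P0 hq) mem0v.
case/span_cons_mem => k [w1 hw1 ->]; rewrite (P_lin hq).
exact: mem_span_cons (IH _ hw1).
Qed.

Lemma sseq_map {G : zmodType} {le : rel G} {F : fieldType} {v : F -> option G}
  {V : vectType F} {alpha : V -> option G} (h : NHyp le v alpha)
  {q : V -> F} (hq : quadratic_form q) x y (t : seq V) :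
  sseq le alpha t -> (forall u, u \in <<t>>%VS -> alpha (Pp q x y u) = alpha u) ->
  sseq le alpha (map (Pp q x y) t).
Proof.
elim: t => [|f t IH] //= [hf0 [hft ht]] hiso.
have hP0 : forall l, Pp q x y (l *: f) = l *: Pp q x y f.
  by move=> l; rewrite -[l *: f]addr0 (P_lin hq) (P0 hq) addr0.
split; [|split].
- apply/eqP => e; apply: (a_neq0 h _ hf0).
  by rewrite -hiso ?mem_span_head // e (a0 h).
- move=> u w' /vlineP [l ->] /(span_map_P hq) [w hw ->].
  rewrite -(P_lin hq) -hP0 !hiso; first exact: hft (memvZ _ (memv_line _)) hw.
  + by apply: memvZ; apply: mem_span_head.
  + exact: mem_span_cons.
- apply: IH => // u hu; apply: hiso; exact: (subvP (sub_span_cons _ _)).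
Qed.

Definition pv {F : fieldType} {V : vectType F} (p : V * V) : {vspace V} :=
  <<[:: p.1; p.2]>>%VS.
Definition Sps {F : fieldType} {V : vectType F} (ps : seq (V * V)) : {vspace V} :=
  (\sum_(i < size ps) pv (nth ((0%R : V), (0%R : V)) ps i))%VS.
Definition orthv {F : fieldType} {V : vectType F} (q : V -> F) (A B : {vspace V}) :=
  forall a b, a \in A -> b \in B -> polar q a b = 0.

Fixpoint good {G : zmodType} (le : rel G) {F : fieldType} (v : F -> option G)
  {V : vectType F} (alpha : V -> option G) (q : V -> F) (eps : G) (ps : seq (V * V)) : Prop :=
  match ps with
  | [::] => True
  | p :: ps' => [/\ cpair le v alpha q eps p.1 p.2, ns le alpha <[p.1]> <[p.2]>,
                    ns le alpha (pv p) (Sps ps'), orthv q (pv p) (Sps ps')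
                  & good le v alpha q eps ps']
  end.

Lemma Sps_cons {F : fieldType} {V : vectType F} (p : V * V) ps :
  Sps (p :: ps) = (pv p + Sps ps)%VS.
Proof. by rewrite /Sps /= big_ord_recl. Qed.

Lemma Sps_nil {F : fieldType} {V : vectType F} : Sps ([::] : seq (V * V)) = 0%VS.
Proof. by rewrite /Sps big_ord0. Qed.

Lemma pv_mem {F : fieldType} {V : vectType F} (p : V * V) a :
  a \in pv p -> exists k1 k2, a = k1 *: p.1 + k2 *: p.2.
Proof.
case/span_cons_mem => k1 [w /span_cons_mem [k2 [w0]]].
rewrite span_nil memv0 => /eqP -> -> ->; exists k1, k2; by rewrite addr0.
Qed.

Definition compatC {G : zmodType} (le : rel G) {F : fieldType} (v : F -> option G)
  {V : vectType F} (alpha : V -> option G) (q : V -> F) (eps : G) (U : {vspace V}) :=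
  forall z, z \in U -> z != 0 -> exists2 y, y \in U &
    y != 0 /\ v (polar q z y) = oadd (oadd (alpha z) (alpha y)) (Some eps).

Lemma MAIN {G : zmodType} {le : rel G} {F : fieldType} {v : F -> option G}
  {V : vectType F} {alpha : V -> option G} {q : V -> F} {eps : G}
  (hQ : QHyp le v alpha q eps) n :
  forall s : seq V, (size s <= n)%N -> sseq le alpha s ->
  compatC le v alpha q eps <<s>>%VS ->
  exists ps, good le v alpha q eps ps /\ Sps ps = <<s>>%VS.
Proof.
have hN := QN hQ; have hG := NhG hN; have hq := Qq hQ.
elim: n => [|n IH] [|x s'] //=.
- by move=> _ _ _; exists [::]; rewrite Sps_nil span_nil.
- by move=> _ _ _; exists [::]; rewrite Sps_nil span_nil.
rewrite ltnS => hn [hx0 [hxs' hs']] hc.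
have [y hyU [hy0 hcy]] := hc x (mem_span_head _ _) hx0.
case/span_cons_mem: (hyU) => k [y1 hy1 ey].
have hkx : k *: x \in <[x]>%VS by apply: memvZ; apply: memv_line.
have hle1 : ole le (alpha y) (alpha (k *: x)) by rewrite ey; apply: hxs'.
have hle2 : ole le (alpha y) (alpha y1) by rewrite ey; apply: (ns_r hN hxs').
have hax : alpha x <> None by apply: (a_neq0 hN).
have hay : alpha y <> None by apply: (a_neq0 hN).
have hS : oadd (alpha x) (alpha y) <> None by move/oadd_eqN => [].
have hpol : v (polar q x y1) = v (polar q x y).
  have -> : polar q x y1 = polar q x y + - (k * polar q x x).
    by rewrite ey (polarDr hq) (polarZr hq) addrAC subrr add0r.
  apply: (ultra_strict hG (v_ultra hN) (vN hN)).
  rewrite (vN hN) hcy [oadd (oadd (alpha x) (alpha y)) (Some eps)]oaddC.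
  have h1 := nole_oadd hG (Qeps hQ) (ole_oaddl hG hle1) hS.
  apply: (nole_trans_r hG h1).
  rewrite (vM hN); apply: (ole_trans hG); last first.
    apply: (ole_oaddl hG); exact: (vpxx hQ x).
  rewrite (aZ hN) (AC (1*(1*2)) (3*(1*(2*4)))); exact: (ole_refl hG).
have hay1 : alpha y1 = alpha y.
  apply: (ole_anti hG) => //.
  have := cA hQ x y1; rewrite hpol hcy => h3.
  have h4 := ole_oadd_canc hG (nole_neq (Qeps hQ)) h3.
  exact: (ole_oadd_cancl hG hax h4).
have hy10 : y1 != 0 by apply/eqP => e; apply: hay; rewrite -hay1 e (a0 hN).
have hp : cpair le v alpha q eps x y1 by split => //; rewrite hpol hcy hay1.
have [t [hy1t et st]] := EX hN s' y1 hs' hy1 hy10.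
have hxt : ns le alpha <[x]> <<y1 :: t>> by rewrite et.
have hst : sseq le alpha (x :: y1 :: t) by [].
have hD : Dd q x y1 != 0 by apply/eqP => e; apply: (D_neq0 hQ hp); rewrite e (v0 hN).
case: (hy1t) => _ [hy1t' ht].
set P := Pp q x y1.
have hiso := P_iso hQ t hp hst.
have hs2 : sseq le alpha (map P t) by apply: (sseq_map hN hq).
have horth : forall z', z' \in <<map P t>>%VS -> polar q x z' = 0 /\ polar q y1 z' = 0.
  move=> z' /(span_map_P hq) [w _ ->].
  by rewrite polarC (P_orth_x hq _ _ _ hD) polarC (P_orth_y hq _ _ _ hD).
have hU : <<x :: s'>>%VS = <<x :: y1 :: t>>%VS by rewrite !(span_cons x) et.
have htU : (<<t>> <= <<x :: s'>>)%VS.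
  by rewrite hU; apply: (subv_trans (sub_span_cons y1 t)); apply: sub_span_cons.
have hy1U : y1 \in <<x :: s'>>%VS.
  by rewrite hU; apply: (subvP (sub_span_cons _ _)); apply: mem_span_head.
have hPU : forall u, u \in <<x :: s'>>%VS -> P u \in <<x :: s'>>%VS.
  move=> u hu; rewrite /P /Pp; apply: memvB => //; apply: memvD; apply: memvZ => //.
  exact: mem_span_head.
have hsub : (<<map P t>> <= <<x :: s'>>)%VS.
  apply/span_subvP => f' /mapP [f hf ->]; apply: hPU.
  by apply: (subvP htU); apply: memv_span.
have hc2 : compatC le v alpha q eps <<map P t>>%VS.
  move=> z' hz' hz0.
  have [y' hy'U [hy'0 hcy']] := hc z' (subvP hsub _ hz') hz0.
  move: hy'U; rewrite hU => /span_cons_mem [k1 [w1 /span_cons_mem [k2 [w hw ew1]] ey']]; subst w1 y'.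
  have [ox oy] := horth z' hz'.
  have hpw : polar q z' (P w) = polar q z' (k1 *: x + (k2 *: y1 + w)).
    rewrite /P /Pp (polarBr hq) !(polarDr hq) !(polarZr hq).
    by rewrite !(polarC q z') ox oy !mulr0 !add0r subr0.
  have hle3 : ole le (alpha (k1 *: x + (k2 *: y1 + w))) (alpha w).
    apply: (ole_trans hG (ns_r hN hxt _ _)).
    + by apply: memvZ; apply: memv_line.
    + exact: mem_span_cons.
    apply: (ns_r hN hy1t') => //; by apply: memvZ; apply: memv_line.
  have haz : alpha z' <> None by apply: (a_neq0 hN).
  have hle4 : ole le (alpha (P w)) (alpha (k1 *: x + (k2 *: y1 + w))).
    have := cA hQ z' (P w); rewrite hpw hcy' => h3.
    have h4 := ole_oadd_canc hG (nole_neq (Qeps hQ)) h3.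
    exact: (ole_oadd_cancl hG haz h4).
  have hPw : alpha (P w) = alpha (k1 *: x + (k2 *: y1 + w)).
    by apply: (ole_anti hG) => //; rewrite hiso.
  exists (P w); first exact: mem_span_map_P.
  split; last by rewrite hpw hcy' hPw.
  by apply/eqP => e; apply: (a_neq0 hN _ hy'0); rewrite -hPw e (a0 hN).
have hsz : (size (map P t) <= n)%N.
  by rewrite size_map st; apply: leq_trans hn; apply: leq_pred.
have [ps' [hgood eps']] := IH _ hsz hs2 hc2.
exists ((x, y1) :: ps'); split.
- split => //=.
  + apply: (ns_mono hxt (subvv _)); rewrite -memvE; exact: mem_span_head.
  + rewrite eps' => a b /pv_mem [k1 [k2 ->]] hb /=.
    apply: (KEY2 hQ hp); rewrite addrC addKr.
    * by rewrite polarC; case: (horth b hb).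
    * by rewrite polarC; case: (horth b hb).
  + rewrite eps' => a b /pv_mem [k1 [k2 ->]] hb /=.
    have [ox oy] := horth b hb.
    by rewrite (polarDl hq) !(polarZl hq) ox oy !mulr0 addr0.
- rewrite Sps_cons eps'; apply: subv_anti; apply/andP; split.
  + rewrite subv_add hsub andbT /pv span_cons_sub span_cons_sub span_nil sub0v andbT.
    by rewrite mem_span_head hy1U.
  + rewrite hU span_cons_sub span_cons_sub.
    have hxy1 : (pv (x, y1) <= pv (x, y1) + <<map P t>>)%VS by apply: addvSl.
    rewrite (subvP hxy1 _ (mem_span_head _ _)) /=.
    rewrite (subvP hxy1) /=; last first.
      by apply: (subvP (sub_span_cons _ _)); apply: mem_span_head.
    apply/span_subvP => f hf.
    have -> : f = P f + (Pa q x y1 f *: x + Pb q x y1 f *: y1) by rewrite /P /Pp subrK.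
    apply: memvD.
      apply: (subvP (addvSr _ _)); apply: (mem_span_map_P hq); exact: memv_span.
    apply: (subvP hxy1); apply: mem_span_cons.
    by rewrite -[_ *: y1]addr0; apply: mem_span_cons; rewrite span_nil mem0v.
Qed.

Definition extf {F : fieldType} {n : nat} (c : 'I_n -> F) (l : F) (j : 'I_n.+1) : F :=
  if unlift ord0 j is Some i then c i else l.

Lemma sseq_of_split {G : zmodType} {le : rel G} {F : fieldType} {v : F -> option G}
  {V : vectType F} {alpha : V -> option G} (h : NHyp le v alpha) (s : seq V) :
  free s ->
  (forall l : 'I_(size s) -> F, forall i,
     ole le (alpha (\sum_(j < size s) l j *: s`_j)) (alpha (l i *: s`_i))) ->
  sseq le alpha s.
Proof.
elim: s => [|a s IH] //=; rewrite free_cons => /andP [has hfs] hsp.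
have hsum : forall (c : 'I_(size s) -> F) l,
    \sum_(j < (size s).+1) extf c l j *: (a :: s)`_j = l *: a + \sum_(j < size s) c j *: s`_j.
  move=> c l; rewrite big_ord_recl /extf unlift_none /=; congr (_ + _).
  by apply: eq_bigr => i _; rewrite liftK add0n.
split; [|split].
- by apply: contraNneq has => ->; rewrite mem0v.
- move=> u w /vlineP [l ->] hw.
  rewrite (coord_span (X := in_tuple s) hw).
  have := hsp (extf (fun i => coord (in_tuple s) i w) l) ord0.
  by rewrite hsum /extf unlift_none.
- apply: IH => // l i; have := hsp (extf l 0) (lift ord0 i).
  rewrite hsum scale0r add0r /extf liftK lift0 /=; exact.
Qed.

Lemma split_ominI {G : zmodType} {le : rel G} {F : fieldType} {v : F -> option G}
  {V : vectType F} {alpha : V -> option G} (h : NHyp le v alpha) n (x : 'I_n -> V) :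
  (forall i, ole le (alpha (\sum_(j < n) x j)) (alpha (x i))) ->
  alpha (\sum_(j < n) x j) = ominI le (fun i => alpha (x i)).
Proof.
move=> hx; have hG := NhG h; apply: (ole_anti hG); first exact: ominI_ge.
apply: (ultra_sum hG (a_ultra h) (a0 h)) => i _; exact: (ominI_le hG).
Qed.

Lemma good_nth {G : zmodType} {le : rel G} {F : fieldType} {v : F -> option G}
  {V : vectType F} {alpha : V -> option G} {q : V -> F} {eps : G} ps i :
  good le v alpha q eps ps -> (i < size ps)%N ->
  cpair le v alpha q eps (nth ((0%R : V), (0%R : V)) ps i).1 (nth ((0%R : V), (0%R : V)) ps i).2 /\
  ns le alpha <[(nth ((0%R : V), (0%R : V)) ps i).1]> <[(nth ((0%R : V), (0%R : V)) ps i).2]>.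
Proof.
elim: ps i => [|p ps IH] [|i] //=; first by case.
by case=> _ _ _ _ hg hi; apply: IH.
Qed.

Lemma pv_sub_Sps {F : fieldType} {V : vectType F} (ps : seq (V * V)) i :
  (i < size ps)%N -> (pv (nth ((0%R : V), (0%R : V)) ps i) <= Sps ps)%VS.
Proof. by move=> hi; apply: (sumv_sup (Ordinal hi)). Qed.

Lemma good_orth {G : zmodType} {le : rel G} {F : fieldType} {v : F -> option G}
  {V : vectType F} {alpha : V -> option G} {q : V -> F} {eps : G} ps :
  good le v alpha q eps ps -> forall i j a b, (i < size ps)%N -> (j < size ps)%N ->
  i != j -> a \in pv (nth ((0%R : V), (0%R : V)) ps i) -> b \in pv (nth ((0%R : V), (0%R : V)) ps j) -> polar q a b = 0.
Proof.
elim: ps => [|p ps IH] //= [_ _ _ ho hg] [|i] [|j] a b //= hi hj hij ha hb.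
- by apply: ho => //; apply: (subvP (pv_sub_Sps ps j hj)).
- by rewrite polarC; apply: ho => //; apply: (subvP (pv_sub_Sps ps i hi)).
- exact: IH hi hj hij ha hb.
Qed.

Lemma good_split {G : zmodType} {le : rel G} {F : fieldType} {v : F -> option G}
  {V : vectType F} {alpha : V -> option G} {q : V -> F} {eps : G}
  (h : NHyp le v alpha) ps :
  good le v alpha q eps ps -> forall x : nat -> V,
  (forall i, (i < size ps)%N -> x i \in pv (nth ((0%R : V), (0%R : V)) ps i)) ->
  forall j, (j < size ps)%N ->
  ole le (alpha (\sum_(i < size ps) x i)) (alpha (x j)).
Proof.
have hG := NhG h.
elim: ps => [|p ps IH] //= [_ _ hns _ hg] x hx j hj.
rewrite -(big_mkord xpredT) big_nat_recl // (big_mkord xpredT (fun i => x i.+1)).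
have hR : \sum_(i < size ps) x i.+1 \in Sps ps.
  rewrite /Sps; have H := (@memv_sumr _ _ _ xpredT (fun i : 'I_(size ps) => x i.+1) (fun i => pv (nth ((0%R : V), (0%R : V)) ps i))).
  by apply: H => i _; apply: (hx i.+1 (ltn_ord i)).
have hx0 : x 0%N \in pv p by apply: (hx 0%N).
case: j hj => [|j] hj.
- exact: hns.
- apply: (ole_trans hG (ns_r h hns hx0 hR)).
  exact: (IH hg (fun i => x i.+1) (fun i hi => hx i.+1 hi) j hj).
Qed.

Lemma pair_compat {G : zmodType} {le : rel G} {F : fieldType} {v : F -> option G}
  {V : vectType F} {alpha : V -> option G} {q : V -> F} {eps : G}
  (hQ : QHyp le v alpha q eps) {x y} : cpair le v alpha q eps x y ->
  forall a b, alpha (a *: x + b *: y) = alpha (a *: x) ->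
  ole le (alpha (a *: x)) (alpha (b *: y)) -> a *: x + b *: y != 0 ->
  v (polar q (a *: x + b *: y) y) =
  oadd (oadd (alpha (a *: x + b *: y)) (alpha y)) (Some eps).
Proof.
case=> hx hy hc a b hE hab hz0.
have hN := QN hQ; have hG := NhG hN; have hq := Qq hQ.
have haz : alpha (a *: x) <> None by rewrite -hE; apply: (a_neq0 hN).
have hay : alpha y <> None by apply: (a_neq0 hN).
have hT : oadd (alpha (a *: x)) (alpha y) <> None by move/oadd_eqN => [].
rewrite (polarDl hq) !(polarZl hq) hE.
have hac : v (a * polar q x y) = oadd (oadd (alpha (a *: x)) (alpha y)) (Some eps).
  by rewrite (vM hN) hc (aZ hN) !oaddA.
rewrite (ultra_strict hG (v_ultra hN) (vN hN)) ?hac //.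
rewrite [oadd (oadd _ _) (Some eps)]oaddC.
have h1 := nole_oadd hG (Qeps hQ) (ole_oaddr hG (c := alpha y) hab) hT.
apply: (nole_trans_r hG h1).
rewrite (vM hN) (aZ hN); apply: (ole_trans hG); last first.
  by apply: (ole_oaddl hG); exact: (vpxx hQ y).
rewrite (AC (1*(2*1)) (2*(1*(3*4)))); exact: (ole_refl hG).
Qed.

Lemma pv_dim {G : zmodType} {le : rel G} {F : fieldType} {v : F -> option G}
  {V : vectType F} {alpha : V -> option G} {q : V -> F} {eps : G}
  (h : NHyp le v alpha) (p : V * V) :
  cpair le v alpha q eps p.1 p.2 -> ns le alpha <[p.1]> <[p.2]> ->
  \dim (pv p) = 2%N.
Proof.
case=> hx hy _ hns; apply/eqP.
rewrite /pv -[2%N]/(size [:: p.1; p.2]); rewrite -/(free _) free_cons seq1_free hy andbT.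
rewrite span_seq1; apply/negP => /vlineP [k ek].
apply: (a_neq0 h _ hx); apply: (oleNI (le:=le)).
have hm : - (k *: p.2) \in <[p.2]>%VS by rewrite memvN; apply: memvZ; apply: memv_line.
by have := hns p.1 (- (k *: p.2)) (memv_line p.1) hm; rewrite {1}ek subrr (a0 h).
Qed.

Lemma pv_vnorm {G : zmodType} {le : rel G} {F : fieldType} {v : F -> option G}
  {V : vectType F} {alpha : V -> option G} {q : V -> F} {eps : G}
  (h : NHyp le v alpha) (p : V * V) :
  cpair le v alpha q eps p.1 p.2 -> ns le alpha <[p.1]> <[p.2]> ->
  vnorm_on le v (pv p) alpha.
Proof.
move=> hp hns; have hG := NhG h; split.
- by move=> z _; apply: (a0E h).
- by move=> l z _; apply: (aZ h).
- by move=> z w _ _; apply: (a_ultra h).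
rewrite (pv_dim h p hp hns); exists [tuple p.1; p.2]; split.
  rewrite /basis_of /= eqxx /= /free /=; apply/eqP.
  exact: (pv_dim h p hp hns).
move=> l; apply: (split_ominI h) => i.
rewrite !big_ord_recl big_ord0 addr0 /=.
case: i => [[|[|//]] hi] /=.
- have -> : Ordinal hi = ord0 by apply: val_inj.
  by apply: hns; apply: memvZ; apply: memv_line.
- have -> : Ordinal hi = lift ord0 ord0 by apply: val_inj.
  by apply: (ns_r h hns); apply: memvZ; apply: memv_line.
Qed.

Lemma pv_compat {G : zmodType} {le : rel G} {F : fieldType} {v : F -> option G}
  {V : vectType F} {alpha : V -> option G} {q : V -> F} {eps : G}
  (hQ : QHyp le v alpha q eps) (p : V * V) :
  cpair le v alpha q eps p.1 p.2 -> ns le alpha <[p.1]> <[p.2]> ->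
  compatible_on le v (pv p) q alpha eps.
Proof.
move=> hp hns; have hN := QN hQ; have hG := NhG hN; split.
- by move=> x y _ _; apply: (cA hQ).
- by move=> x _; apply: (cB hQ).
move=> z /pv_mem [k1 [k2 ->]] hz0.
have hk1 : k1 *: p.1 \in <[p.1]>%VS by apply: memvZ; apply: memv_line.
have hk2 : k2 *: p.2 \in <[p.2]>%VS by apply: memvZ; apply: memv_line.
case: (ole_dec (le:=le) (alpha (k1 *: p.1)) (alpha (k2 *: p.2))) => hc.
- exists p.2; first by apply: memv_span; rewrite !inE eqxx orbT.
  split; first by case: hp.
  apply: (pair_compat hQ hp) => //; exact: (ns_eq hN hns).
- exists p.1; first by apply: memv_span; rewrite !inE eqxx.
  split; first by case: hp.
  rewrite addrC; apply: (pair_compat hQ (cpair_sym hp)) => //.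
  + apply: (ole_anti hG); first by rewrite addrC; apply: (ns_r hN hns).
    apply: (ultra_ge hG (a_ultra hN)); first exact: (ole_refl hG).
    exact: (nole_ole hG hc).
  + exact: (nole_ole hG hc).
  + by rewrite addrC.
Qed.

Theorem proposition4p5
  (G : zmodType) (le : rel G) (hG : divisible_ordered_group le)
  (F : fieldType) (v : F -> option G) (hv : valuation le v)
  (V : vectType F) (q : V -> F) (hq : quadratic_form q)
  (alpha : V -> option G) (eps : G)
  (halpha : vnorm_on le v fullv alpha)
  (hcomp : compatible_on le v fullv q alpha eps)
  (heps0 : le 0 eps) (heps2 : olt le (Some eps) (v 2)) :
  exists (n : nat) (Vs : 'I_n -> {vspace V}),
    (forall i, \dim (Vs i) = 2%N) /\
    (\sum_(i < n) Vs i)%VS = fullv /\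
    directv (\sum_(i < n) Vs i)%VS /\
    (forall i j x y, i != j -> x \in Vs i -> y \in Vs j -> polar q x y = 0) /\
    (forall i, vnorm_on le v (Vs i) alpha /\
               compatible_on le v (Vs i) q alpha eps) /\
    (forall x : 'I_n -> V, (forall i, x i \in Vs i) ->
       alpha (\sum_(i < n) x i) = ominI le (fun i => alpha (x i))).
Proof.
have hN : NHyp le v alpha by split.
have hQ : QHyp le v alpha q eps.
  split => //; case: heps2 => h1 h2 h3; apply: h2; exact: (ole_anti hG h1 h3).
have [s [hfree hspan hsplit]] : exists s : seq V,
    [/\ free s, <<s>>%VS = fullv &
     forall l : 'I_(size s) -> F, forall i,
     ole le (alpha (\sum_(j < size s) l j *: s`_j)) (alpha (l i *: s`_i))].
  case: (halpha) => _ _ _ [e [hb hs]].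
  move: e hb hs; move: (\dim (fullv : {vspace V})) => d [s hs] hb hsp.
  move/eqP: (hs) => hsd; subst d; exists s; case/andP: hb => /eqP hb hf; split => // l i.
  rewrite (hsp l); exact: (ominI_le hG).
have hse : sseq le alpha s by apply: (sseq_of_split hN).
have hc : compatC le v alpha q eps <<s>>%VS.
  by move=> z _ hz0; case: hcomp => _ _ h3; have [y _ hy] := h3 z (memvf z) hz0;
    exists y => //; rewrite hspan memvf.
have [ps [hg eps']] := MAIN hQ (size s) s (leqnn _) hse hc.
set Vs := fun i : 'I_(size ps) => pv (nth ((0%R : V), (0%R : V)) ps i).
have hsp2 : forall x : 'I_(size ps) -> V, (forall i, x i \in Vs i) ->
    forall j, ole le (alpha (\sum_(i < size ps) x i)) (alpha (x j)).
  move=> x hx j.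
  pose x' (k : nat) := if insub k is Some i then x i else 0.
  have ex : forall i : 'I_(size ps), x' i = x i by move=> i; rewrite /x' valK.
  have := good_split hN ps hg x' _ j (ltn_ord j).
  rewrite ex; under eq_bigr do rewrite ex; apply.
  by move=> i hi; have := hx (Ordinal hi); rewrite -ex.
exists (size ps), Vs; split; [|split; [|split; [|split; [|split]]]].
- by move=> i; have [hp hns] := good_nth ps i hg (ltn_ord i); apply: (pv_dim hN _ hp hns).
- by rewrite -hspan -eps'.
- apply/directv_sum_independent => us hus hsum i _.
  apply/(a0E hN); apply: (oleNI (le:=le)); rewrite -(a0 hN) -hsum.
  by apply: hsp2 => j; apply: hus.
- move=> i j x y hij hx hy; apply: (good_orth ps hg _ _ _ _ (ltn_ord i) (ltn_ord j) _ hx hy).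
  exact: hij.
- move=> i; have [hp hns] := good_nth ps i hg (ltn_ord i); split.
  + exact: (pv_vnorm hN _ hp hns).
  + exact: (pv_compat hQ _ hp hns).
- move=> x hx; apply: (split_ominI hN); exact: hsp2.
Qed.
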